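(* Assume the setting below, on the mesh $S_\lambda$ with either $\lambda=N$ or $\lambda=\varepsilon^{-1}$. Suppose there are a constant $C'>0$ and numbers $\tilde\eta_1,\tilde\eta_2\ge0$ such that \[ |\tau_i[w]|\le \begin{cases} C'\tilde\eta_1\varepsilon^{-1}, & 1\le i\le J-1,\\ C'\tilde\eta_2, & J\le i\le N-1.\end{cases} \] Then \[ \|w^N-W^N\|\le C\max\{\tilde\eta_1\ln\lambda,\ \tilde\eta_2\}, \] where $C$ is independent of $\varepsilon$, $N$, $\tilde\eta_1$ and $\tilde\eta_2$.
   Context: Standing setup. Let $0<\varepsilon<1$. Let $b,c,f\in C^4[0,1]$, and let $\beta$ be a constant with $b(x)>\beta>0$ and $c(x)\ge0$ on $[0,1]$. Let $u$ be the solution of $-\varepsilon u''-b u'+cu=f$ on $(0,1)$ with $u(0)=u(1)=0$. Let $u_0$ be the solution of $-b u_0'+c u_0=f$ on $(0,1)$ with $u_0(1)=0$. Set $w=u-u_0$; it solves $-\varepsilon w''-bw'+cw=\varepsilon u_0''$, $w(0)=-u_0(0)$, $w(1)=0$. Mesh $S_\lambda$. $N$ is a positive integer. $Q\in(0,1)$ is a fixed rational number such that $J=QN$ is an integer. $a>0$ is a mesh parameter, and $\lambda\in\{N,\varepsilon^{-1}\}$. The transition point is $\xi=(a\varepsilon/\beta)\ln\lambda$, assumed to satisfy $\xi\le Q$. Set $h=\xi/J$ and $H=(1-\xi)/(N-J)$. The mesh points are $x_i=ih$ for $0\le i\le J$ and $x_i=\xi+(i-J)H$ for $J\le i\le N$.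 Write $h_i=x_i-x_{i-1}$ and $\hbar_i=(h_i+h_{i+1})/2$. Scheme. $D^+U_i=(U_{i+1}-U_i)/h_{i+1}$, $D^-U_i=(U_i-U_{i-1})/h_i$, $D''U_i=(D^+U_i-D^-U_i)/\hbar_i$. Let $\sigma(\rho)=2\rho/(e^{2\rho}-1)$ for $\rho>0$, $\sigma(0)=1$, and $\rho_i=b(x_i)h_{i+1}/(2\varepsilon)$. The ASI operator is $L^NU_i=-\varepsilon\sigma(\rho_i)D''U_i-b(x_i)D^+U_i+c(x_i)U_i$ for $1\le i\le N-1$. $W^N$ solves $W^N_0=-u_0(0)$, $L^NW^N_i=\varepsilon u_0''(x_i)$ for $1\le i\le N-1$, $W^N_N=0$. $g^N$ is the restriction of $g$ to the mesh, and $\|U\|=\max_i|U_i|$. The truncation error is $\tau_i[g]=-\varepsilon\sigma(\rho_i)D''g(x_i)-b(x_i)D^+g(x_i)+\varepsilon g''(x_i)+b(x_i)g'(x_i)$. $C$ denotes a generic positive constant independent of $\varepsilon$ and $N$. *)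

(* Defs.v *)
From Stdlib Require Import Reals Lra ZArith.
From Coquelicot Require Import Coquelicot.
Open Scope R_scope.

(* g belongs to C^k[0,1]: g agrees on [0,1] with a function that is C^k on R
   (equivalent to C^k[0,1] with one-sided derivatives at the endpoints,
   by the standard extension theorem). *)
Definition Ck01 (k : nat) (g : R -> R) : Prop :=
  exists G : R -> R, (forall t, 0 <= t <= 1 -> G t = g t) /\
    forall j, (j <= k)%nat -> forall t, ex_derive_n G j t /\ continuous (Derive_n G j) t.

Definition sigma (rho : R) : R :=
  if Req_EM_T rho 0 then 1 else 2 * rho / (exp (2 * rho) - 1).

Definition mesh (xi : R) (N J : nat) (i : nat) : R :=
  if (i <=? J)%nat then INR i * (xi / INR J)
  else xi + INR (i - J) * ((1 - xi) / INR (N - J)).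

Definition hstep (x : nat -> R) (i : nat) : R := x i - x (i - 1)%nat.
Definition hbar (x : nat -> R) (i : nat) : R := (hstep x i + hstep x (i + 1)%nat) / 2.

Definition Dp (x : nat -> R) (U : nat -> R) (i : nat) : R :=
  (U (i + 1)%nat - U i) / hstep x (i + 1)%nat.
Definition Dm (x : nat -> R) (U : nat -> R) (i : nat) : R :=
  (U i - U (i - 1)%nat) / hstep x i.
Definition Dpp (x : nat -> R) (U : nat -> R) (i : nat) : R :=
  (Dp x U i - Dm x U i) / hbar x i.

Definition rho (eps : R) (b : R -> R) (x : nat -> R) (i : nat) : R :=
  b (x i) * hstep x (i + 1)%nat / (2 * eps).

Definition LN (eps : R) (b c : R -> R) (x : nat -> R) (U : nat -> R) (i : nat) : R :=
  - eps * sigma (rho eps b x i) * Dpp x U i - b (x i) * Dp x U i + c (x i) * U i.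

Definition tau (eps : R) (b : R -> R) (x : nat -> R) (g : R -> R) (i : nat) : R :=
  - eps * sigma (rho eps b x i) * Dpp x (fun j => g (x j)) i
  - b (x i) * Dp x (fun j => g (x j)) i
  + eps * Derive_n g 2 (x i) + b (x i) * Derive g (x i).

(* Main.v *)
Require Import Defs.
From Stdlib Require Import Reals Lra ZArith.
From Coquelicot Require Import Coquelicot.
Open Scope R_scope.
From Stdlib Require Import Lia.

Lemma sig_facts r : 0 < r -> 0 < Defs.sigma r /\ Defs.sigma r <= 1 /\ 1 <= Defs.sigma r * exp (2*r).
Proof.
  intros Hr. unfold Defs.sigma. destruct (Req_EM_T r 0) as [E|E]; [lra|].
  assert (H1 : 1 + 2*r < exp (2*r)) by (apply exp_ineq1; lra).
  assert (H2 : 1 + - (2*r) <= exp (- (2*r))) by apply exp_ineq1_le.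
  rewrite exp_Ropp in H2.
  set (X := exp (2*r)) in *.
  assert (HX : 0 < X) by (unfold X; apply exp_pos).
  assert (Hs : 2 * r / (X - 1) * (X - 1) = 2 * r) by (field; lra).
  set (s := 2 * r / (X - 1)) in *.
  assert (H3 : X * (1 - 2*r) <= 1).
  { apply (Rmult_le_compat_l X) in H2; [|lra]. rewrite Rinv_r in H2; lra. }
  repeat split.
  - nra.
  - nra.
  - nra.
Qed.

Lemma Dn_minus (u u0 : R->R) k t : Ck01 2 u -> Ck01 2 u0 -> 0<t<1 -> (k<=2)%nat ->
 Derive_n (fun s => u s - u0 s) k t = Derive_n u k t - Derive_n u0 k t.
Proof.
  intros [G [HG HGd]] [G0 [HG0 HG0d]] Ht Hk.
  assert (Hloc: locally t (fun s => 0 <= s <= 1)).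
  { apply (locally_interval _ t 0 1); simpl; try lra. intros y H1 H2; simpl in *; lra. }
  rewrite (Derive_n_ext_loc (fun s => u s - u0 s) (fun s => G s - G0 s)).
  2: { eapply filter_imp; [|exact Hloc]. intros s Hs; simpl; rewrite HG, HG0; auto. }
  idtac.
  rewrite Derive_n_minus.
  2,3: apply filter_forall; intros y k' Hk'.
  2: apply HGd; lia.
  2: apply HG0d; lia.
  rewrite (Derive_n_ext_loc u G), (Derive_n_ext_loc u0 G0); auto.
  - eapply filter_imp; [|exact Hloc]. intros s Hs; simpl; rewrite HG0; auto.
  - eapply filter_imp; [|exact Hloc]. intros s Hs; simpl; rewrite HG; auto.
Qed.

Lemma first_min (f:nat->R) n : exists k, (k<=n)%nat /\ (forall i, (i<=n)%nat -> f k <= f i) /\ (forall i, (i<k)%nat -> f k < f i).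
Proof.
  induction n as [|n [k [Hk [Hm Hf]]]].
  - exists 0%nat. split; [lia|]. split; [intros i Hi; replace i with 0%nat by lia; lra| intros; lia].
  - destruct (Rlt_le_dec (f (S n)) (f k)).
    + exists (S n). split; [lia|]. split.
      * intros i Hi. destruct (Nat.eq_dec i (S n)); [subst; lra|]. specialize (Hm i ltac:(lia)); lra.
      * intros i Hi. specialize (Hm i ltac:(lia)); lra.
    + exists k. split; [lia|]. split; auto.
      intros i Hi. destruct (Nat.eq_dec i (S n)); [subst; lra|]. apply Hm; lia.
Qed.

Section M.
Variables (xi : R) (N J : nat).
Hypotheses (Hxi : 0 < xi < 1) (HJ1 : (1 <= J)%nat) (HJN : (J < N)%nat).
Let h := xi / INR J.
Let H := (1 - xi) / INR (N - J).

Lemma INRJpos : 0 < INR J.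
Proof. apply lt_0_INR; lia. Qed.
Lemma INRNJpos : 0 < INR (N - J).
Proof. apply lt_0_INR; lia. Qed.
Lemma hpos : 0 < h.
Proof. unfold h. pose proof INRJpos. apply Rdiv_lt_0_compat; lra. Qed.
Lemma Hpos : 0 < H.
Proof. unfold H. pose proof INRNJpos. apply Rdiv_lt_0_compat; lra. Qed.
Lemma hle : h <= xi.
Proof. unfold h. pose proof INRJpos. assert (1 <= INR J) by (apply (le_INR 1); lia).
  apply Rmult_le_reg_r with (INR J); [lra|]. unfold Rdiv. rewrite Rmult_assoc, Rinv_l; nra. Qed.

Lemma mesh_lo i : (i <= J)%nat -> mesh xi N J i = INR i * h.
Proof. intros Hi. unfold mesh. apply Nat.leb_le in Hi. rewrite Hi. reflexivity. Qed.

Lemma mesh_hi i : (J <= i)%nat -> mesh xi N J i = xi + INR (i - J) * H.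
Proof. intros Hi. unfold mesh. destruct (Nat.eq_dec i J) as [->|Hne].
  - rewrite Nat.leb_refl, Nat.sub_diag. simpl. unfold h. pose proof INRJpos. field. lra.
  - assert (E: (i <=? J)%nat = false) by (apply Nat.leb_gt; lia). rewrite E. reflexivity. Qed.

Lemma hstep_lo i : (1 <= i <= J)%nat -> hstep (mesh xi N J) i = h.
Proof. intros Hi. unfold hstep. rewrite !mesh_lo by lia.
  replace i with (S (i - 1)) at 1 by lia. rewrite S_INR. ring. Qed.

Lemma hstep_hi i : (J + 1 <= i)%nat -> hstep (mesh xi N J) i = H.
Proof. intros Hi. unfold hstep. rewrite !mesh_hi by lia.
  replace (i - J)%nat with (S (i - 1 - J)) by lia. rewrite S_INR. ring. Qed.

Lemma mesh0 : mesh xi N J 0 = 0.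
Proof. rewrite mesh_lo by lia. simpl. ring. Qed.

Lemma meshN : mesh xi N J N = 1.
Proof. rewrite mesh_hi by lia. unfold H. pose proof INRNJpos. field. lra. Qed.

Lemma mesh_in i : (i <= N)%nat -> 0 <= mesh xi N J i <= 1.
Proof. intros Hi. pose proof hpos. pose proof Hpos. destruct (le_lt_dec i J).
  - rewrite mesh_lo by lia. assert (0 <= INR i <= INR J) by (split; [apply pos_INR|apply le_INR; lia]).
    assert (INR J * h = xi) by (unfold h; pose proof INRJpos; field; lra). nra.
  - rewrite mesh_hi by lia. assert (0 <= INR (i-J) <= INR (N-J)) by (split; [apply pos_INR|apply le_INR; lia]).
    assert (INR (N-J) * H = 1 - xi) by (unfold H; pose proof INRNJpos; field; lra). nra.
Qed.

Lemma mesh_int i : (1 <= i <= N - 1)%nat -> 0 < mesh xi N J i < 1.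
Proof. intros Hi. pose proof hpos. pose proof Hpos. destruct (le_lt_dec i J).
  - rewrite mesh_lo by lia. assert (1 <= INR i <= INR J) by (split; [apply (le_INR 1)|apply le_INR]; lia).
    assert (INR J * h = xi) by (unfold h; pose proof INRJpos; field; lra).
    assert (INR i * h <= INR J * h) by (apply Rmult_le_compat_r; lra).
    assert (0 < INR i * h) by (apply Rmult_lt_0_compat; lra). lra.
  - rewrite mesh_hi by lia. assert (1 <= INR (i-J) <= INR (N-J) - 1).
    { split. apply (le_INR 1); lia. replace (N-J)%nat with (S (i-J) + (N - 1 - i))%nat by lia.
      rewrite plus_INR, S_INR. pose proof (pos_INR (N-1-i)). lra. }
    assert (INR (N-J) * H = 1 - xi) by (unfold H; pose proof INRNJpos; field; lra).
    assert (INR (i-J) * H <= (INR (N-J) - 1) * H) by (apply Rmult_le_compat_r; lra).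
    assert (0 < INR (i-J) * H) by (apply Rmult_lt_0_compat; lra). nra.
Qed.

Lemma hstep_pos i : (1 <= i <= N)%nat -> 0 < hstep (mesh xi N J) i.
Proof. intros Hi. pose proof hpos; pose proof Hpos. destruct (le_lt_dec i J).
  rewrite hstep_lo by lia; lra. rewrite hstep_hi by lia; lra. Qed.

Lemma hbar_pos i : (i <= N - 1)%nat -> 0 < hbar (mesh xi N J) i.
Proof. intros Hi. unfold hbar. pose proof (hstep_pos (i+1) ltac:(lia)).
  destruct i. assert (hstep (mesh xi N J) 0 = 0) by (unfold hstep; simpl; ring). lra.
  pose proof (hstep_pos (S i) ltac:(lia)). lra. Qed.

Lemma hbar_coarse i : (J <= i <= N - 1)%nat -> H / 2 <= hbar (mesh xi N J) i.
Proof. intros Hi. unfold hbar. rewrite (hstep_hi (i+1)) by lia.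
  pose proof (hstep_pos i ltac:(lia)). lra. Qed.

Lemma hbar_fine i : (1 <= i <= J - 1)%nat -> hbar (mesh xi N J) i = h.
Proof. intros Hi. unfold hbar. rewrite !hstep_lo by lia. lra. Qed.

Lemma hstep_next_fine i : (1 <= i <= J - 1)%nat -> hstep (mesh xi N J) (i+1) = h.
Proof. intros; apply hstep_lo; lia. Qed.

Lemma Jh : INR J * h = xi.
Proof. unfold h; pose proof INRJpos; field; lra. Qed.
End M.

Fixpoint gs (F kap bb : nat->R) (n:nat) : R :=
  match n with O => 0 | S m => (F m + kap m * gs F kap bb m) / (kap m + bb m) end.
Fixpoint Ss (g : nat->R) (x : nat->R) (n:nat) : R :=
  match n with O => 0 | S m => Ss g x m + g (S m) * hstep x (S m) end.

Lemma LN_sub eps b c x U V i :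
  LN eps b c x (fun j => U j - V j) i = LN eps b c x U i - LN eps b c x V i.
Proof. unfold LN, Dpp, Dp, Dm, Rdiv. cbv beta. ring. Qed.
Lemma LN_add eps b c x U V i :
  LN eps b c x (fun j => U j + V j) i = LN eps b c x U i + LN eps b c x V i.
Proof. unfold LN, Dpp, Dp, Dm, Rdiv. cbv beta. ring. Qed.

Lemma maxp eps b c x N Z : 0<eps ->
  (forall i, (1<=i<=N)%nat -> 0 < hstep x i) ->
  (forall i, (1<=i<=N-1)%nat -> 0 < b (x i) /\ 0 <= c (x i)) ->
  0 <= Z 0%nat -> 0 <= Z N ->
  (forall i, (1<=i<=N-1)%nat -> 0 <= LN eps b c x Z i) ->
  forall i, (i<=N)%nat -> 0 <= Z i.
Proof.
  intros He Hh Hbc H0 HN HL i Hi.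
  destruct (first_min Z N) as [k [Hk [Hm Hf]]].
  destruct (Rle_lt_dec 0 (Z k)) as [Hz|Hz]; [specialize (Hm i Hi); lra|exfalso].
  assert (k <> 0%nat) by (intro; subst; lra).
  assert (k <> N) by (intro; subst; lra).
  assert (Hk1 : (1 <= k <= N-1)%nat) by lia.
  specialize (HL k Hk1). destruct (Hbc k Hk1) as [Hb Hc].
  assert (Zm : Z k < Z (k-1)%nat) by (apply Hf; lia).
  assert (Zp : Z k <= Z (k+1)%nat) by (apply Hm; lia).
  pose proof (Hh k ltac:(lia)) as hm. pose proof (Hh (k+1)%nat ltac:(lia)) as hp.
  unfold LN, Dpp, Dp, Dm, hbar in HL.
  set (a1 := hstep x k) in *. set (a2 := hstep x (k+1)) in *.
  assert (Hr : 0 < rho eps b x k).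
  { unfold rho. fold a2. apply Rdiv_lt_0_compat; [apply Rmult_lt_0_compat|]; lra. }
  destruct (sig_facts _ Hr) as [Hs _].
  set (s := Defs.sigma (rho eps b x k)) in *.
  set (P := (Z (k+1)%nat - Z k) / a2) in *.
  set (Q := (Z k - Z (k-1)%nat) / a1) in *.
  assert (HP : 0 <= P) by (unfold P; apply Rdiv_le_0_compat; lra).
  assert (HQ : Q < 0).
  { unfold Q, Rdiv. apply Ropp_lt_cancel. rewrite Ropp_0, Ropp_mult_distr_l.
    apply Rmult_lt_0_compat; [lra| apply Rinv_0_lt_compat; lra]. }
  assert (HD : 0 < (P - Q) / ((a1 + a2)/2)) by (apply Rdiv_lt_0_compat; lra).
  assert (0 < eps * s * ((P - Q) / ((a1 + a2)/2))) by (apply Rmult_lt_0_compat; [apply Rmult_lt_0_compat|]; lra).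
  assert (0 <= b (x k) * P) by (apply Rmult_le_pos; lra).
  assert (c (x k) * Z k <= 0).
  { apply Ropp_le_cancel. rewrite Ropp_0, Ropp_mult_distr_r. apply Rmult_le_pos; lra. }
  lra.
Qed.

Definition kapf eps b x m := eps * Defs.sigma (rho eps b x m) / hbar x m.

Lemma LN_V eps b c x F N i : (1 <= i)%nat -> 0 < hstep x i -> 0 < hstep x (i+1) -> 0 < hbar x i ->
  0 < kapf eps b x i + b (x i) ->
  LN eps b c x (fun j => Ss (gs F (kapf eps b x) (fun m => b (x m))) x N - Ss (gs F (kapf eps b x) (fun m => b (x m))) x j) i
  = F i + c (x i) * (Ss (gs F (kapf eps b x) (fun m => b (x m))) x N - Ss (gs F (kapf eps b x) (fun m => b (x m))) x i).
Proof.
  intros Hi h1 h2 hb Hk.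
  set (g := gs F (kapf eps b x) (fun m => b (x m))).
  set (SN := Ss g x N).
  assert (Dp1 : Dp x (fun j => SN - Ss g x j) i = - g (i+1)%nat).
  { unfold Dp. replace (i+1)%nat with (S i) in * by lia. simpl Ss. field. lra. }
  assert (Dm1 : Dm x (fun j => SN - Ss g x j) i = - g i).
  { unfold Dm. destruct i as [|m]; [lia|]. replace (S m - 1)%nat with m by lia. simpl Ss. field. lra. }
  assert (Hg : g (i+1)%nat * (kapf eps b x i + b (x i)) = F i + kapf eps b x i * g i).
  { replace (i+1)%nat with (S i) by lia. unfold g. simpl gs. field. lra. }
  unfold LN, Dpp. rewrite Dp1, Dm1.
  unfold kapf in Hg, Hk.
  set (s := Defs.sigma (rho eps b x i)) in *.
  set (hh := hbar x i) in *.
  assert (E : - eps * s * ((- g (i+1)%nat - - g i) / hh) - b (x i) * - g (i+1)%nat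
            = g (i+1)%nat * (eps * s / hh + b (x i)) - eps * s / hh * g i) by (field; lra).
  rewrite E, Hg. ring.
Qed.

Lemma gs_lin F1 F2 kap bb n : (forall m, (m < n)%nat -> kap m + bb m <> 0) ->
  gs (fun m => F1 m + F2 m) kap bb n = gs F1 kap bb n + gs F2 kap bb n.
Proof.
  induction n as [|n IH]; intros Hd; simpl; [ring|].
  rewrite IH by (intros; apply Hd; lia). field. apply Hd; lia.
Qed.

Lemma gs_nonneg F kap bb n : (forall m, (m < n)%nat -> 0 <= F m /\ 0 <= kap m /\ 0 < kap m + bb m) ->
  0 <= gs F kap bb n.
Proof.
  induction n as [|n IH]; intros Hd; simpl; [lra|].
  destruct (Hd n ltac:(lia)) as [a [b c]]. pose proof (IH ltac:(intros; apply Hd; lia)).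
  apply Rdiv_le_0_compat; [|lra]. apply Rplus_le_le_0_compat; [lra|apply Rmult_le_pos; lra].
Qed.

Lemma gs_upper F kap bb n Fb beta : 0 < beta -> 0 <= Fb ->
  (forall m, (m < n)%nat -> F m <= Fb /\ 0 <= kap m /\ beta <= bb m) ->
  gs F kap bb n <= Fb / beta.
Proof.
  intros Hb HF. induction n as [|n IH]; intros Hd; simpl.
  - apply Rdiv_le_0_compat; lra.
  - destruct (Hd n ltac:(lia)) as [a [b c]]. pose proof (IH ltac:(intros; apply Hd; lia)) as Hg.
    set (G := gs F kap bb n) in *.
    apply Rmult_le_reg_r with (kap n + bb n); [lra|].
    unfold Rdiv at 1. rewrite Rmult_assoc, Rinv_l by lra. rewrite Rmult_1_r.
    assert (Fb / beta * beta = Fb) by (field; lra).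
    assert (kap n * G <= kap n * (Fb / beta)) by (apply Rmult_le_compat_l; lra).
    assert (Fb / beta * beta <= Fb / beta * bb n) by (apply Rmult_le_compat_l; [apply Rdiv_le_0_compat|]; lra).
    nra.
Qed.

Lemma gs_step F kap bb n : 0 < kap n -> 0 <= bb n -> 0 <= F n -> 0 <= gs F kap bb n ->
  gs F kap bb (S n) <= gs F kap bb n + F n / kap n.
Proof.
  intros Hk Hb HF Hg. simpl. set (G := gs F kap bb n) in *.
  apply Rmult_le_reg_r with (kap n + bb n); [lra|].
  unfold Rdiv at 1. rewrite Rmult_assoc, Rinv_l by lra. rewrite Rmult_1_r.
  assert (F n / kap n * kap n = F n) by (field; lra).
  assert (0 <= F n / kap n) by (apply Rdiv_le_0_compat; lra).
  nra.
Qed.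

Lemma exp_le p q : p <= q -> exp p <= exp q.
Proof. intros H. destruct (Req_dec p q) as [->|]; [lra|]. apply Rlt_le, exp_increasing; lra. Qed.

Theorem theorem3 (b c f : R -> R) (beta a Q C' : R) (lamN : bool) :
  Ck01 4 b -> Ck01 4 c -> Ck01 4 f ->
  0 < beta -> (forall t, 0 <= t <= 1 -> beta < b t) ->
  (forall t, 0 <= t <= 1 -> 0 <= c t) ->
  0 < a -> 0 < Q < 1 -> (exists p q : Z, q <> 0%Z /\ Q = IZR p / IZR q) ->
  0 < C' ->
  exists C : R, 0 < C /\
  forall (eps : R) (N J : nat) (u u0 : R -> R) (W : nat -> R) (eta1 eta2 : R),
    0 < eps < 1 -> (0 < N)%nat -> INR J = Q * INR N ->
    let lam := if lamN then INR N else / eps in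
    let xi := a * eps / beta * ln lam in
    xi <= Q ->
    let x := mesh xi N J in
    Ck01 2 u ->
    (forall t, 0 < t < 1 -> - eps * Derive_n u 2 t - b t * Derive u t + c t * u t = f t) ->
    u 0 = 0 -> u 1 = 0 ->
    Ck01 2 u0 ->
    (forall t, 0 < t < 1 -> - b t * Derive u0 t + c t * u0 t = f t) ->
    u0 1 = 0 ->
    let w := fun t => u t - u0 t in
    W 0%nat = - u0 0 ->
    (forall i, (1 <= i <= N - 1)%nat -> LN eps b c x W i = eps * Derive_n u0 2 (x i)) ->
    W N = 0 ->
    0 <= eta1 -> 0 <= eta2 ->
    (forall i, (1 <= i <= J - 1)%nat -> Rabs (tau eps b x w i) <= C' * eta1 / eps) ->
    (forall i, (J <= i <= N - 1)%nat -> Rabs (tau eps b x w i) <= C' * eta2) ->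
    forall i, (i <= N)%nat ->
      Rabs (w (x i) - W i) <= C * Rmax (eta1 * ln lam) eta2.
Proof.
  intros Hb Hc Hf Hbeta Hbb Hcc Ha HQ HQrat HC'.
  destruct Hb as [Gb [HGb HGbd]].
  destruct (continuity_ab_maj Gb 0 1) as [Mx [HMx HMx01]]; [lra| |].
  { intros t Ht. apply continuity_pt_filterlim. exact (proj2 (HGbd 0%nat ltac:(lia) t)). }
  set (Bm := Gb Mx).
  assert (HBm : forall t, 0 <= t <= 1 -> b t <= Bm).
  { intros t Ht. rewrite <- HGb by exact Ht. apply HMx; exact Ht. }
  assert (HBmb : beta < Bm) by (unfold Bm; rewrite HGb by exact HMx01; apply Hbb; exact HMx01).
  set (K0 := exp Bm + / beta).
  assert (HK0 : 0 < K0) by (unfold K0; pose proof (exp_pos Bm); pose proof (Rinv_0_lt_compat beta Hbeta); lra).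
  set (C1 := C' * a * (1 + 2*K0) / (beta*beta)).
  assert (HC1 : 0 < C1).
  { unfold C1. apply Rdiv_lt_0_compat; [|nra]. apply Rmult_lt_0_compat; [nra|lra]. }
  assert (HCb : 0 < C' / beta) by (apply Rdiv_lt_0_compat; lra).
  exists (C1 + C' / beta + 1). split; [lra|].
  intros eps N J u u0 W eta1 eta2 Heps HN HJ lam xi Hxi x Hu Hode Hu0z Hu1 Hu0 Hode0 Hu01 w
    HW0 HWeq HWN He1 He2 Ht1 Ht2 i Hi.
  assert (HNpos : 0 < INR N) by (apply lt_0_INR; lia).
  assert (HJ1 : (1 <= J)%nat).
  { destruct J; [simpl in HJ; nra|lia]. }
  assert (HJN : (J < N)%nat) by (apply INR_lt; rewrite HJ; nra).
  assert (Hln : 0 < ln lam).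
  { unfold lam. destruct lamN.
    - assert (INR 1 < INR N) by (apply lt_INR; lia). rewrite INR_1 in H.
      rewrite <- ln_1. apply ln_increasing; lra.
    - rewrite ln_Rinv by lra. assert (ln eps < ln 1) by (apply ln_increasing; lra).
      rewrite ln_1 in H; lra. }
  assert (Hxi0 : 0 < xi).
  { unfold xi. apply Rmult_lt_0_compat; [|lra]. apply Rdiv_lt_0_compat; [nra|lra]. }
  assert (Hxi01 : 0 < xi < 1) by lra.
  set (h := xi / INR J). set (H := (1 - xi) / INR (N - J)).
  assert (hp : 0 < h) by exact (hpos xi N J Hxi01 HJ1 HJN).
  assert (Hp : 0 < H) by exact (Hpos xi N J Hxi01 HJ1 HJN).
  assert (hxi : h <= xi) by exact (hle xi N J Hxi01 HJ1 HJN).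
  assert (Jhxi : INR J * h = xi) by exact (Jh xi N J HJ1 HJN).
  assert (hlo : forall k, (1 <= k <= J)%nat -> hstep x k = h) by exact (hstep_lo xi N J HJ1 HJN).
  assert (hhi : forall k, (J + 1 <= k)%nat -> hstep x k = H) by exact (hstep_hi xi N J HJ1 HJN).
  assert (x0 : x 0%nat = 0) by exact (mesh0 xi N J HJ1 HJN).
  assert (xN : x N = 1) by exact (meshN xi N J HJ1 HJN).
  assert (xin : forall k, (k <= N)%nat -> 0 <= x k <= 1) by exact (mesh_in xi N J Hxi01 HJ1 HJN).
  assert (xint : forall k, (1 <= k <= N-1)%nat -> 0 < x k < 1) by exact (mesh_int xi N J Hxi01 HJ1 HJN).
  assert (hsp : forall k, (1 <= k <= N)%nat -> 0 < hstep x k) by exact (hstep_pos xi N J Hxi01 HJ1 HJN).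
  assert (hbp : forall k, (k <= N-1)%nat -> 0 < hbar x k) by exact (hbar_pos xi N J Hxi01 HJ1 HJN).
  assert (hbc : forall k, (J <= k <= N-1)%nat -> H / 2 <= hbar x k) by exact (hbar_coarse xi N J Hxi01 HJ1 HJN).
  assert (hbf : forall k, (1 <= k <= J-1)%nat -> hbar x k = h) by exact (hbar_fine xi N J HJ1 HJN).
  clearbody h H.
  set (kap := kapf eps b x). set (bb := fun m => b (x m)).
  assert (Hrho : forall m, (m <= N-1)%nat -> 0 < rho eps b x m).
  { intros m Hm. unfold rho. apply Rdiv_lt_0_compat; [|lra]. apply Rmult_lt_0_compat.
    - pose proof (Hbb (x m) (xin m ltac:(lia))); lra.
    - apply hsp; lia. }
  assert (Hkap : forall m, (m <= N-1)%nat -> 0 < kap m).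
  { intros m Hm. unfold kap, kapf. destruct (sig_facts _ (Hrho m Hm)) as [Hs _].
    apply Rdiv_lt_0_compat; [nra|]. apply hbp; lia. }
  assert (Hbbm : forall m, (m <= N)%nat -> beta < bb m).
  { intros m Hm. unfold bb. apply Hbb, xin; lia. }
  assert (Hden : forall m, (m <= N-1)%nat -> 0 < kap m + bb m).
  { intros m Hm. pose proof (Hkap m Hm). pose proof (Hbbm m ltac:(lia)). lra. }
  set (A := C' * eta1 / eps). set (D := C' * eta2).
  assert (HA : 0 <= A) by (unfold A; apply Rdiv_le_0_compat; nra).
  assert (HD : 0 <= D) by (unfold D; nra).
  set (FA := fun m => if andb (Nat.leb 1 m) (Nat.leb m (J-1)) then A else 0).
  set (FD := fun m => if Nat.leb 1 m then D else 0).
  assert (FAb : forall m, 0 <= FA m <= A) by (intros m; unfold FA; destruct (Nat.leb 1 m), (Nat.leb m (J-1)); simpl; lra).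
  assert (FDb : forall m, 0 <= FD m <= D) by (intros m; unfold FD; destruct (Nat.leb 1 m); lra).
  set (gA := gs FA kap bb). set (gD := gs FD kap bb).
  set (g := gs (fun m => FA m + FD m) kap bb).
  assert (gsplit : forall n, (n <= N)%nat -> g n = gA n + gD n).
  { intros n Hn. unfold g, gA, gD. apply gs_lin. intros m Hm. pose proof (Hden m ltac:(lia)). lra. }
  assert (gA_nn : forall n, (n <= N)%nat -> 0 <= gA n).
  { intros n Hn. apply gs_nonneg. intros m Hm. pose proof (FAb m). pose proof (Hkap m ltac:(lia)).
    pose proof (Hden m ltac:(lia)). repeat split; lra. }
  assert (gD_nn : forall n, (n <= N)%nat -> 0 <= gD n).
  { intros n Hn. apply gs_nonneg. intros m Hm. pose proof (FDb m). pose proof (Hkap m ltac:(lia)).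
    pose proof (Hden m ltac:(lia)). repeat split; lra. }
  assert (gA_up : forall n, (n <= N)%nat -> gA n <= A / beta).
  { intros n Hn. apply gs_upper; auto. intros m Hm. pose proof (FAb m). pose proof (Hkap m ltac:(lia)).
    pose proof (Hbbm m ltac:(lia)). repeat split; lra. }
  assert (gD_up : forall n, (n <= N)%nat -> gD n <= D / beta).
  { intros n Hn. apply gs_upper; auto. intros m Hm. pose proof (FDb m). pose proof (Hkap m ltac:(lia)).
    pose proof (Hbbm m ltac:(lia)). repeat split; lra. }
  assert (g_nn : forall n, (n <= N)%nat -> 0 <= g n).
  { intros n Hn. rewrite gsplit by exact Hn. pose proof (gA_nn n Hn); pose proof (gD_nn n Hn); lra. }
  set (Sg := Ss g x).
  assert (SgS : forall n, Sg (S n) = Sg n + g (S n) * hstep x (S n)) by reflexivity.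
  assert (Sg0 : Sg 0%nat = 0) by reflexivity.
  assert (S_nn : forall n, (n <= N)%nat -> 0 <= Sg n).
  { induction n as [|n IH]; intros Hn; [lra|]. rewrite SgS.
    pose proof (IH ltac:(lia)). pose proof (g_nn (S n) Hn). pose proof (hsp (S n) ltac:(lia)).
    nra. }
  assert (S_mono : forall k n, (n + k <= N)%nat -> Sg n <= Sg (n + k)%nat).
  { induction k as [|k IH]; intros n Hn. rewrite Nat.add_0_r; lra.
    replace (n + S k)%nat with (S (n + k)) by lia. rewrite SgS.
    pose proof (IH n ltac:(lia)). pose proof (g_nn (S (n+k)) ltac:(lia)). pose proof (hsp (S (n+k)) ltac:(lia)). nra. }
  assert (Ssplit : forall n, (n <= N)%nat -> Sg n = Ss gA x n + Ss gD x n).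
  { induction n as [|n IH]; intros Hn; [simpl; lra|]. rewrite SgS. simpl. rewrite IH by lia. rewrite gsplit by lia. ring. }
  assert (SD_b : forall n, (n <= N)%nat -> Ss gD x n <= D / beta * (x n - x 0%nat)).
  { induction n as [|n IH]; intros Hn; simpl; [lra|].
    pose proof (IH ltac:(lia)). pose proof (gD_up (S n) Hn). pose proof (hsp (S n) ltac:(lia)).
    assert (Eh : hstep x (S n) = x (S n) - x n) by (unfold hstep; replace (S n - 1)%nat with n by lia; reflexivity).
    rewrite Eh in *. nra. }
  set (y := xi / eps). set (E := exp (Bm * y)).
  assert (Hy : 0 < y) by (unfold y; apply Rdiv_lt_0_compat; lra).
  assert (HE : 0 < E) by apply exp_pos.
  assert (gAS : forall n, gA (S n) = (FA n + kap n * gA n) / (kap n + bb n)) by reflexivity.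
  assert (gA_fine : forall n, (n <= J)%nat -> gA n <= INR n * (A * h * E / eps)).
  { induction n as [|n IH]; intros Hn.
    - simpl. unfold gA. simpl. lra.
    - pose proof (IH ltac:(lia)) as IH'.
      assert (Hstep : gA (S n) <= gA n + FA n / kap n).
      { apply gs_step. apply Hkap; lia. pose proof (Hbbm n ltac:(lia)); lra.
        apply FAb. apply gA_nn; lia. }
      assert (Hq : FA n / kap n <= A * h * E / eps).
      { destruct (Nat.eq_dec n 0) as [->|Hn0].
        - unfold FA. simpl. unfold Rdiv at 1. rewrite Rmult_0_l.
          apply Rdiv_le_0_compat; [|lra]. apply Rmult_le_pos; [nra|lra].
        - assert (FAn : FA n = A).
          { unfold FA. replace (Nat.leb 1 n) with true by (symmetry; apply Nat.leb_le; lia).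
            replace (Nat.leb n (J-1)) with true by (symmetry; apply Nat.leb_le; lia). reflexivity. }
          rewrite FAn.
          assert (Hr := Hrho n ltac:(lia)).
          destruct (sig_facts _ Hr) as [Hs1 [Hs2 Hs3]].
          set (s := Defs.sigma (rho eps b x n)) in *.
          assert (Hkn : kap n = eps * s / h).
          { unfold kap, kapf. fold s. rewrite hbf by lia. reflexivity. }
          assert (Hr2 : 2 * rho eps b x n <= Bm * y).
          { unfold rho. rewrite (hlo (n+1)%nat) by lia.
            pose proof (HBm (x n) (xin n ltac:(lia))). pose proof (Hbb (x n) (xin n ltac:(lia))).
            unfold y. apply Rle_trans with (Bm * h / eps).
            + replace (2 * (b (x n) * h / (2 * eps))) with (b (x n) * h / eps) by (field; lra).
              apply Rmult_le_compat_r; [apply Rlt_le, Rinv_0_lt_compat; lra|]. apply Rmult_le_compat_r; lra.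
            + unfold Rdiv. rewrite Rmult_assoc. apply Rmult_le_compat_l; [lra|].
              apply Rmult_le_compat_r; [apply Rlt_le, Rinv_0_lt_compat; lra|lra]. }
          assert (Hse : 1 <= s * E).
          { apply Rle_trans with (s * exp (2 * rho eps b x n)); [exact Hs3|].
            apply Rmult_le_compat_l; [lra|]. apply exp_le; exact Hr2. }
          rewrite Hkn.
          assert (Ei : A / (eps * s / h) = (A * h / eps) * / s) by (field; lra).
          rewrite Ei.
          assert (/ s <= E).
          { apply Rmult_le_reg_l with s; [lra|]. rewrite Rinv_r; lra. }
          assert (0 <= A * h / eps) by (apply Rdiv_le_0_compat; nra).
          apply Rle_trans with (A * h / eps * E); [apply Rmult_le_compat_l; lra|]. right; field; lra. }
      rewrite S_INR. lra. }
  assert (HM : forall n, (n <= J)%nat -> gA n <= A * y * K0).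
  { intros n Hn. pose proof (gA_fine n Hn) as G1. pose proof (gA_up n ltac:(lia)) as G2.
    assert (INR n <= INR J) by (apply le_INR; lia).
    assert (0 <= A * h * E / eps) by (apply Rdiv_le_0_compat; [apply Rmult_le_pos; nra|lra]).
    assert (G3 : gA n <= A * y * E).
    { apply Rle_trans with (INR J * (A * h * E / eps)); [nra|]. right. unfold y. rewrite <- Jhxi. field. lra. }
    assert (Hib : 0 < / beta) by (apply Rinv_0_lt_compat; lra).
    destruct (Rle_dec y 1) as [Hy1|Hy1].
    - assert (E <= exp Bm) by (apply exp_le; nra).
      apply Rle_trans with (A * y * E); [exact G3|]. unfold K0.
      assert (0 <= A * y) by nra. nra.
    - apply Rle_trans with (A / beta); [exact G2|]. unfold K0.
      assert (A / beta = A * / beta) by reflexivity.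
      assert (0 <= A * y) by nra. assert (0 <= exp Bm) by (apply Rlt_le, exp_pos).
      assert (A * / beta * 1 <= A * / beta * y) by (apply Rmult_le_compat_l; nra).
      assert (0 <= A * y * exp Bm) by nra.
      replace (A * y * (exp Bm + / beta)) with (A * y * exp Bm + A * / beta * y) by ring. lra. }
  assert (SAf : forall n, (n <= J)%nat -> Ss gA x n <= INR n * h * (A / beta)).
  { induction n as [|n IH]; intros Hn; [simpl; lra|].
    simpl Ss. rewrite (hlo (S n)) by lia. pose proof (IH ltac:(lia)). pose proof (gA_up (S n) ltac:(lia)).
    rewrite S_INR. nra. }
  assert (SAc : forall k, (J + k <= N)%nat -> Ss gA x (J + k) <= Ss gA x J + 2 * eps / beta * (gA J - gA (J + k)%nat)).
  { induction k as [|k IH]; intros Hk.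
    - rewrite Nat.add_0_r. lra.
    - replace (J + S k)%nat with (S (J + k)) by lia. simpl Ss.
      set (n := (J + k)%nat) in *.
      pose proof (IH ltac:(lia)) as IH'.
      rewrite (hhi (S n)) by lia.
      assert (FAn : FA n = 0).
      { unfold FA. replace (Nat.leb n (J-1)) with false by (symmetry; apply Nat.leb_gt; lia).
        destruct (Nat.leb 1 n); reflexivity. }
      assert (Hrec : gA (S n) * (kap n + bb n) = kap n * gA n).
      { rewrite gAS, FAn. field. pose proof (Hden n ltac:(lia)); lra. }
      pose proof (Hkap n ltac:(lia)) as Hk1. pose proof (Hbbm n ltac:(lia)) as Hb1.
      pose proof (gA_nn (S n) ltac:(lia)) as G1. pose proof (gA_nn n ltac:(lia)) as G0.
      assert (Hdiff : bb n * gA (S n) = kap n * (gA n - gA (S n))) by nra.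
      assert (Hdnn : 0 <= gA n - gA (S n)) by nra.
      assert (HkH : kap n * H <= 2 * eps).
      { unfold kap, kapf. destruct (sig_facts _ (Hrho n ltac:(lia))) as [Hs1 [Hs2 _]].
        pose proof (hbc n ltac:(lia)). pose proof (hbp n ltac:(lia)).
        set (s := Defs.sigma (rho eps b x n)) in *.
        replace (eps * s / hbar x n * H) with (eps * s * (H / hbar x n)) by (field; lra).
        assert (H / hbar x n <= 2).
        { apply Rmult_le_reg_r with (hbar x n); [lra|]. replace (H / hbar x n * hbar x n) with H by (field; lra). lra. }
        assert (0 <= H / hbar x n) by (apply Rdiv_le_0_compat; lra).
        assert (eps * s <= eps) by nra. nra. }
      assert (Hkey : beta * (gA (S n) * H) <= 2 * eps * (gA n - gA (S n))).
      { apply Rle_trans with (bb n * gA (S n) * H).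
        { assert (0 <= (bb n - beta) * (gA (S n) * H)) by (apply Rmult_le_pos; nra). nra. }
        rewrite Hdiff. replace (kap n * (gA n - gA (S n)) * H) with ((kap n * H) * (gA n - gA (S n))) by ring.
        apply Rmult_le_compat_r; lra. }
      assert (gA (S n) * H <= 2 * eps / beta * (gA n - gA (S n))).
      { apply Rmult_le_reg_l with beta; [lra|].
        replace (beta * (2 * eps / beta * (gA n - gA (S n)))) with (2 * eps * (gA n - gA (S n))) by (field; lra). lra. }
      nra. }
  assert (SAN : Ss gA x N <= C1 * (eta1 * ln lam)).
  { pose proof (SAc (N - J)%nat ltac:(lia)) as G. replace (J + (N - J))%nat with N in G by lia.
    pose proof (SAf J ltac:(lia)) as G2. rewrite Jhxi in G2.
    pose proof (HM J ltac:(lia)) as G3. pose proof (gA_nn N ltac:(lia)).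
    assert (0 < 2 * eps / beta) by (apply Rdiv_lt_0_compat; lra).
    assert (G4 : Ss gA x N <= xi * (A / beta) + 2 * eps / beta * (A * y * K0)) by nra.
    apply Rle_trans with (1 := G4). right. unfold C1, A, y, xi. field. lra. }
  assert (SN : Sg N <= C1 * (eta1 * ln lam) + C' / beta * eta2).
  { rewrite Ssplit by lia. pose proof (SD_b N ltac:(lia)). rewrite xN, x0 in H0.
    replace (C' / beta * eta2) with (D / beta * (1 - 0)) by (unfold D; field; lra). lra. }
  set (e := fun j => w (x j) - W j).
  assert (Le : forall k, (1 <= k <= N-1)%nat -> LN eps b c x e k = tau eps b x w k).
  { intros k Hk. pose proof (xint k Hk) as Ht.
    assert (E1 : LN eps b c x e k = LN eps b c x (fun j => w (x j)) k - LN eps b c x W k)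
      by exact (LN_sub eps b c x (fun j => w (x j)) W k).
    assert (E2 : LN eps b c x (fun j => w (x j)) k = tau eps b x w k - eps * Derive_n w 2 (x k)
               - b (x k) * Derive w (x k) + c (x k) * w (x k)) by (unfold LN, tau; ring).
    assert (D2 : Derive_n w 2 (x k) = Derive_n u 2 (x k) - Derive_n u0 2 (x k))
      by exact (Dn_minus u u0 2 (x k) Hu Hu0 Ht ltac:(lia)).
    assert (D1 : Derive w (x k) = Derive u (x k) - Derive u0 (x k))
      by exact (Dn_minus u u0 1 (x k) Hu Hu0 Ht ltac:(lia)).
    assert (W1 : w (x k) = u (x k) - u0 (x k)) by reflexivity.
    rewrite E1, E2, D2, D1, W1, (HWeq k Hk).
    pose proof (Hode (x k) Ht). pose proof (Hode0 (x k) Ht). lra. }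
  set (F := fun m => FA m + FD m).
  set (V := fun j => Sg N - Sg j).
  assert (LV : forall k, (1 <= k <= N-1)%nat -> LN eps b c x V k = F k + c (x k) * V k).
  { intros k Hk. exact (LN_V eps b c x F N k ltac:(lia) (hsp k ltac:(lia)) (hsp (k+1)%nat ltac:(lia))
      (hbp k ltac:(lia)) (Hden k ltac:(lia))). }
  assert (Ftau : forall k, (1 <= k <= N-1)%nat -> Rabs (tau eps b x w k) <= F k).
  { intros k Hk. unfold F. pose proof (FAb k). pose proof (FDb k).
    destruct (le_lt_dec k (J-1)) as [Hk1|Hk1].
    - assert (FA k = A).
      { unfold FA. replace (Nat.leb 1 k) with true by (symmetry; apply Nat.leb_le; lia).
        replace (Nat.leb k (J-1)) with true by (symmetry; apply Nat.leb_le; lia). reflexivity. }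
      pose proof (Ht1 k ltac:(lia)). fold A in H3. lra.
    - assert (FD k = D).
      { unfold FD. replace (Nat.leb 1 k) with true by (symmetry; apply Nat.leb_le; lia). reflexivity. }
      pose proof (Ht2 k ltac:(lia)). fold D in H3. lra. }
  assert (cV : forall k, (1 <= k <= N-1)%nat -> 0 <= c (x k) * V k).
  { intros k Hk. apply Rmult_le_pos. apply Hcc, xin; lia.
    unfold V. pose proof (S_mono (N - k)%nat k ltac:(lia)). replace (k + (N - k))%nat with N in H0 by lia. lra. }
  assert (Hbc : forall k, (1 <= k <= N-1)%nat -> 0 < b (x k) /\ 0 <= c (x k)).
  { intros k Hk. split. pose proof (Hbb (x k) (xin k ltac:(lia))); lra. apply Hcc, xin; lia. }
  assert (e0 : e 0%nat = 0).
  { unfold e, w. rewrite x0, HW0, Hu0z. ring. }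
  assert (eN : e N = 0).
  { unfold e, w. rewrite xN, HWN, Hu1, Hu01. ring. }
  assert (V0 : 0 <= V 0%nat) by (unfold V; rewrite Sg0; pose proof (S_nn N ltac:(lia)); lra).
  assert (VN : 0 <= V N) by (unfold V; lra).
  assert (Z1 : 0 <= V i - e i).
  { apply (maxp eps b c x N (fun j => V j - e j)); try lra; auto.
    intros k Hk. rewrite (LN_sub eps b c x V e k), LV, Le by exact Hk.
    pose proof (Ftau k Hk). pose proof (cV k Hk). pose proof (Rle_abs (tau eps b x w k)). lra. }
  assert (Z2 : 0 <= V i + e i).
  { apply (maxp eps b c x N (fun j => V j + e j)); try lra; auto.
    intros k Hk. rewrite (LN_add eps b c x V e k), LV, Le by exact Hk.
    pose proof (Ftau k Hk) as T1. pose proof (cV k Hk). pose proof (Rle_abs (- tau eps b x w k)) as T2.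
    rewrite Rabs_Ropp in T2. lra. }
  assert (Vle : V i <= Sg N) by (unfold V; pose proof (S_nn i Hi); lra).
  change (w (x i) - W i) with (e i).
  assert (Habs : Rabs (e i) <= Sg N) by (apply Rabs_le; lra).
  apply Rle_trans with (1 := Habs). apply Rle_trans with (1 := SN).
  pose proof (Rmax_l (eta1 * ln lam) eta2). pose proof (Rmax_r (eta1 * ln lam) eta2).
  set (Mm := Rmax (eta1 * ln lam) eta2) in *.
  assert (C1 * (eta1 * ln lam) <= C1 * Mm) by (apply Rmult_le_compat_l; lra).
  assert (C' / beta * eta2 <= C' / beta * Mm) by (apply Rmult_le_compat_l; lra).
  nra.
Qed.
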